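(* Let $K_1,K_2\subset\mathbb{R}^n$ be closed with $T_{K_1}(x)=T^a_{K_1}(x)$ for all $x\in\partial K_1\cap\partial K_2$. Let $x_o\in\partial K_1\cap\partial K_2$ and assume there exist a neighborhood $\mathcal{N}(x_o)$ of $x_o$, $c>0$ and $\alpha\in[0,1)$ such that for all $(x_1,x_2)\in((\partial K_1\setminus K_2)\cap\mathcal{N}(x_o))\times((\partial K_2\setminus K_1)\cap\mathcal{N}(x_o))$ there exist $(v_1,v_2)\in T_{K_1}(x_1)\times T_{K_2}(x_2)$ with $|(v_1,v_2)|\le c|x_1-x_2|$ and $$x_2-x_1\in(v_1-v_2)+\alpha|x_1-x_2|\mathbb{B}.$$ Then $$T_{K_1}(x_o)\cap T_{K_2}(x_o)=T_{K_1\cap K_2}(x_o)\quad\text{and}\quad T^a_{K_1}(x_o)\cap T^a_{K_2}(x_o)=T^a_{K_1\cap K_2}(x_o).$$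
   Context: $\mathbb{B}$ is the closed unit ball of $\mathbb{R}^n$. Contingent cone of a set $S$ at $x\in\operatorname{cl}(S)$: $T_S(x)=\{v: \exists t_i\to 0^+, \exists v_i\to v,\ x+t_iv_i\in S\}$. Adjacent cone: $T^a_S(x)=\{v: \forall t_i\to 0^+, \exists v_i\to v,\ x+t_iv_i\in S\}$. *)

(* Defs.v *)
From HB Require Import structures.
From mathcomp Require Import all_boot all_order all_algebra.
From mathcomp Require Import all_classical all_reals all_analysis.
Set Implicit Arguments. Unset Strict Implicit. Unset Printing Implicit Defensive.
Import Order.TTheory GRing.Theory Num.Theory.
Import numFieldNormedType.Exports.
Local Open Scope classical_set_scope.
Local Open Scope ring_scope.

Definition enorm (R : realType) (n : nat) (v : 'rV[R]_n) : R :=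
  Num.sqrt (\sum_(i < n) (v ord0 i) ^+ 2).

Definition enorm2 (R : realType) (n : nat) (v1 v2 : 'rV[R]_n) : R :=
  Num.sqrt (\sum_(i < n) (v1 ord0 i) ^+ 2 + \sum_(i < n) (v2 ord0 i) ^+ 2).

Definition bd (R : realType) (n : nat) (A : set 'rV[R]_n) : set 'rV[R]_n :=
  closure A `\` interior A.

Definition contingent_cone (R : realType) (n : nat) (S : set 'rV[R]_n)
    (x : 'rV[R]_n) : set 'rV[R]_n :=
  [set v | exists (t : nat -> R) (w : nat -> 'rV[R]_n),
     (forall i, 0 < t i) /\ t @ \oo --> 0 /\ w @ \oo --> v /\
     (forall i, S (x + t i *: w i))].

Definition adjacent_cone (R : realType) (n : nat) (S : set 'rV[R]_n)
    (x : 'rV[R]_n) : set 'rV[R]_n :=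
  [set v | forall t : nat -> R, (forall i, 0 < t i) -> t @ \oo --> 0 ->
     exists w : nat -> 'rV[R]_n, w @ \oo --> v /\
       (forall i, S (x + t i *: w i))].

(* Main.v *)
Require Import Defs.
From HB Require Import structures.
From mathcomp Require Import all_boot all_order all_algebra.
From mathcomp Require Import all_classical all_reals all_analysis.
From mathcomp Require Import ring lra.
Import Order.TTheory GRing.Theory Num.Theory.
Import numFieldNormedType.Exports.
Local Open Scope classical_set_scope.
Local Open Scope ring_scope.
Set Implicit Arguments. Unset Strict Implicit. Unset Printing Implicit Defensive.

Definition dotp (R : realType) (n : nat) (u v : 'rV[R]_n) : R :=
  \sum_(i < n) u ord0 i * v ord0 i.

Lemma sumsq_ge0 (R : realType) (n : nat) (v : 'rV[R]_n) :
  0 <= \sum_(i < n) (v ord0 i) ^+ 2.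
Proof. by apply: sumr_ge0 => i _; rewrite sqr_ge0. Qed.

Lemma enorm_ge0 (R : realType) (n : nat) (v : 'rV[R]_n) : 0 <= enorm v.
Proof. exact: sqrtr_ge0. Qed.

Lemma enorm_sq (R : realType) (n : nat) (v : 'rV[R]_n) :
  enorm v ^+ 2 = dotp v v.
Proof.
rewrite /enorm sqr_sqrtr ?sumsq_ge0 //.
Qed.

Lemma dotpC (R : realType) (n : nat) (u v : 'rV[R]_n) : dotp u v = dotp v u.
Proof. by apply: eq_bigr => i _; rewrite mulrC. Qed.

Lemma dotpDl (R : realType) (n : nat) (u v w : 'rV[R]_n) :
  dotp (u + v) w = dotp u w + dotp v w.
Proof. by rewrite /dotp -big_split; apply: eq_bigr => i _; rewrite !mxE mulrDl. Qed.

Lemma dotpNl (R : realType) (n : nat) (u w : 'rV[R]_n) :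
  dotp (- u) w = - dotp u w.
Proof. by rewrite /dotp -sumrN; apply: eq_bigr => i _; rewrite !mxE mulNr. Qed.

Lemma dotpZl (R : realType) (n : nat) (a : R) (u w : 'rV[R]_n) :
  dotp (a *: u) w = a * dotp u w.
Proof. by rewrite /dotp mulr_sumr; apply: eq_bigr => i _; rewrite !mxE mulrA. Qed.

Lemma dotpBl (R : realType) (n : nat) (u v w : 'rV[R]_n) :
  dotp (u - v) w = dotp u w - dotp v w.
Proof. by rewrite dotpDl dotpNl. Qed.

Lemma coord_le_enorm (R : realType) (n : nat) (v : 'rV[R]_n) i :
  `|v ord0 i| <= enorm v.
Proof.
rewrite -sqrtr_sqr ler_wsqrtr //.
rewrite (bigD1 i) //= lerDl; apply: sumr_ge0 => j _; exact: sqr_ge0.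
Qed.

Lemma enorm0_eq (R : realType) (n : nat) (v : 'rV[R]_n) : enorm v = 0 -> v = 0.
Proof.
move=> h; apply/rowP => i; rewrite mxE.
by apply/normr0_eq0/le_anti; rewrite normr_ge0 andbT -h coord_le_enorm.
Qed.

Lemma enorm_gt0 (R : realType) (n : nat) (v : 'rV[R]_n) : v != 0 -> 0 < enorm v.
Proof.
move=> hv; rewrite lt_neqAle enorm_ge0 andbT eq_sym; apply/eqP => /enorm0_eq.
by move/eqP: hv.
Qed.

Lemma enormZ (R : realType) (n : nat) (a : R) (v : 'rV[R]_n) :
  enorm (a *: v) = `|a| * enorm v.
Proof.
rewrite /enorm -sqrtr_sqr -sqrtrM ?sqr_ge0 // mulr_sumr.
by congr Num.sqrt; apply: eq_bigr => i _; rewrite mxE exprMn.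
Qed.

Lemma enormN (R : realType) (n : nat) (v : 'rV[R]_n) : enorm (- v) = enorm v.
Proof. by rewrite -scaleN1r enormZ normrN1 mul1r. Qed.

Lemma enormB (R : realType) (n : nat) (u v : 'rV[R]_n) : enorm (u - v) = enorm (v - u).
Proof. by rewrite -enormN opprB. Qed.

Lemma enorm0 (R : realType) (n : nat) : enorm (0 : 'rV[R]_n) = 0.
Proof. by rewrite -(scale0r (0 : 'rV[R]_n)) enormZ normr0 mul0r. Qed.

Lemma cauchy_schwarz (R : realType) (n : nat) (u v : 'rV[R]_n) :
  dotp u v <= enorm u * enorm v.
Proof.
have [u0|u0] := eqVneq u 0.
  by rewrite u0 /dotp big1 ?mulr_ge0 ?enorm_ge0 // => i _; rewrite mxE mul0r.
have [v0|v0] := eqVneq v 0.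
  by rewrite v0 /dotp big1 ?mulr_ge0 ?enorm_ge0 // => i _; rewrite mxE mulr0.
have a0 := enorm_gt0 u0; have b0 := enorm_gt0 v0.
set a := enorm u in a0 *; set b := enorm v in b0 *.
have an0 : a != 0 by rewrite gt_eqF.
have bn0 : b != 0 by rewrite gt_eqF.
have hkey : forall x y : R, x * y <= x ^+ 2 * (b / (2 * a)) + y ^+ 2 * (a / (2 * b)).
  move=> x y.
  have h : 0 <= (x * b - y * a) ^+ 2 / (2 * a * b) by rewrite divr_ge0 ?sqr_ge0 // !mulr_ge0 // ltW.
  suff -> : x ^+ 2 * (b / (2 * a)) + y ^+ 2 * (a / (2 * b)) = x * y + (x * b - y * a) ^+ 2 / (2 * a * b).
    by rewrite lerDl.
  by field; rewrite /= ?an0 ?bn0.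
apply: le_trans; first by apply: ler_sum => i _; exact: hkey.
rewrite big_split /= -!mulr_suml.
have ea : \sum_(i < n) u ord0 i ^+ 2 = a ^+ 2 by rewrite /a /enorm sqr_sqrtr // sumsq_ge0.
have eb : \sum_(i < n) v ord0 i ^+ 2 = b ^+ 2 by rewrite /b /enorm sqr_sqrtr // sumsq_ge0.
rewrite ea eb le_eqVlt; apply/orP; left; apply/eqP.
by field; rewrite /= ?an0 ?bn0.
Qed.

Lemma cauchy_schwarz_abs (R : realType) (n : nat) (u v : 'rV[R]_n) :
  `|dotp u v| <= enorm u * enorm v.
Proof.
rewrite ler_norml cauchy_schwarz andbT lerNl -dotpNl -(enormN u).
exact: cauchy_schwarz.
Qed.

Lemma enormD (R : realType) (n : nat) (u v : 'rV[R]_n) :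
  enorm (u + v) <= enorm u + enorm v.
Proof.
rewrite -(ler_pXn2r (n:=2)) ?nnegrE ?addr_ge0 ?enorm_ge0 //.
rewrite enorm_sq dotpDl !(dotpC _ (u + v)) !dotpDl -!enorm_sq (dotpC v u).
have := cauchy_schwarz u v; lra.
Qed.
Lemma coord_le_normr (R : realType) (n : nat) (v : 'rV[R]_n) i :
  `|v ord0 i| <= `|v|.
Proof.
rewrite [leRHS]/Num.Def.normr /= mx_normrE.
by apply: le_trans; last exact: (le_bigmax _ _ (ord0, i)).
Qed.

Lemma normr_le_enorm (R : realType) (n : nat) (v : 'rV[R]_n) : `|v| <= enorm v.
Proof.
rewrite [leLHS]/Num.Def.normr /= mx_normrE.
apply: bigmax_le => [|[i j] _]; first exact: sqrtr_ge0.
rewrite (ord1 i) /=.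
rewrite -sqrtr_sqr ler_wsqrtr //.
rewrite (bigD1 j) //= lerDl; apply: sumr_ge0 => k _; exact: sqr_ge0.
Qed.

Lemma enorm_le_normr (R : realType) (n : nat) (v : 'rV[R]_n) :
  enorm v <= n.+1%:R * `|v|.
Proof.
rewrite /enorm -[X in _ <= X]ger0_norm ?mulr_ge0 // -sqrtr_sqr ler_wsqrtr //.
apply: le_trans (_ : \sum_(i < n) `|v|^+2 <= _).
  apply: ler_sum => i _; rewrite -real_normK ?num_real //.
  by rewrite lerXn2r ?nnegrE // coord_le_normr.
rewrite sumr_const card_ord exprMn -[_ *+ n]mulr_natl ler_wpM2r ?sqr_ge0 //.
rewrite -natrX ler_nat; apply: (@leq_trans n.+1) => //.
by rewrite expnS leq_pmulr.
Qed.

Lemma lip_cont (R : realType) (n : nat) (f : 'rV[R]_n -> R) (K : R) :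
  0 < K -> (forall u v, `|f u - f v| <= K * `|u - v|) -> continuous f.
Proof.
move=> K0 hf x; apply/(@cvgrPdist_lt _ _ _ _ (nbhs_filter x)) => e e0.
have := @cvgr_dist_lt R 'rV[R]_n _ (nbhs x) (nbhs_filter x) id x cvg_id _ (divr_gt0 e0 K0).
apply: filterS => y hy.
apply: le_lt_trans (hf x y) _.
by rewrite -ltr_pdivlMl // mulrC.
Qed.

Lemma enorm_dist (R : realType) (n : nat) (u v : 'rV[R]_n) :
  `|enorm u - enorm v| <= enorm (u - v).
Proof.
have h1 := enormD (u - v) v; have h2 := enormD (v - u) u.
rewrite subrK in h1; rewrite subrK enormB in h2.
rewrite ler_norml; apply/andP; split; lra.
Qed.

Lemma enorm_cont (R : realType) (n : nat) : continuous (@enorm R n).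
Proof.
apply: (@lip_cont _ _ _ n.+1%:R) => // u v.
exact: le_trans (enorm_dist u v) (enorm_le_normr _).
Qed.

Lemma dotp_cont (R : realType) (n : nat) (a : 'rV[R]_n) : continuous (dotp a).
Proof.
apply: (@lip_cont _ _ _ (n.+1%:R * (enorm a + 1))).
  by rewrite mulr_gt0 // ltr_wpDl // enorm_ge0.
move=> u v.
have -> : dotp a u - dotp a v = dotp (u - v) a by rewrite dotpBl !(dotpC a).
apply: le_trans (cauchy_schwarz_abs _ _) _.
have h := enorm_le_normr (u - v); have h0 := enorm_ge0 a.
have h1 := enorm_ge0 (u - v); have h2 : 0 <= `|u - v| := normr_ge0 _.
have h3 : (0 : R) <= n.+1%:R by [].
nra.
Qed.

Lemma enorm_sq_add (R : realType) (n : nat) (u w : 'rV[R]_n) (t : R) :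
  enorm (u + t *: w) ^+ 2 = enorm u ^+ 2 + 2 * t * dotp u w + t ^+ 2 * enorm w ^+ 2.
Proof.
rewrite !enorm_sq dotpDl !(dotpC _ (u + _)) !dotpDl !dotpZl (dotpC u (t *: w)) (dotpC w (t *: w)) !dotpZl (dotpC w u).
ring.
Qed.

Lemma first_order (R : realType) (n : nat) (K : set 'rV[R]_n)
    (y1 y2 x1 v : 'rV[R]_n) (eps : R) :
  0 <= eps ->
  (forall z, K z -> enorm (y1 - y2) + eps * enorm (y1 - x1)
                    <= enorm (z - y2) + eps * enorm (z - x1)) ->
  contingent_cone K y1 v ->
  0 <= dotp (y1 - y2) v + eps * enorm (y1 - y2) * enorm v.
Proof.
move=> e0 hmin [t [w [tpos [t0 [wv hK]]]]].
set a := y1 - y2; set d := enorm a.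
have d0 : 0 <= d := enorm_ge0 _.
have ineq : forall k, 0 <= 2 * dotp a (w k) + 2 * eps * d * enorm (w k)
                            + (1 + eps) * t k * (enorm (w k) * enorm (w k)).
  move=> k.
  have := hmin _ (hK k).
  have -> : y1 + t k *: w k - y2 = a + t k *: w k by rewrite /a addrAC.
  have -> : y1 + t k *: w k - x1 = (y1 - x1) + t k *: w k by rewrite addrAC.
  have tk := tpos k.
  have h1 := enormD (y1 - x1) (t k *: w k).
  have h2 := enormD a (t k *: w k).
  rewrite enormZ gtr0_norm // in h1 h2.
  have hsq : enorm (a + t k *: w k) ^+ 2
      = d ^+ 2 + 2 * t k * dotp a (w k) + t k ^+ 2 * (enorm (w k) * enorm (w k)).
    by rewrite enorm_sq_add -/d; ring.
  have eg0 := enorm_ge0 (a + t k *: w k).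
  have Wg0 := enorm_ge0 (w k).
  have Xg0 := enorm_ge0 (y1 - x1).
  set e := enorm (a + t k *: w k) in hsq h2 eg0 *.
  set W := enorm (w k) in hsq h1 h2 Wg0 *.
  set X := enorm (y1 - x1) in h1 Xg0 *.
  set X' := enorm (y1 - x1 + t k *: w k) in h1 *.
  move=> hm.
  change (enorm (y1 - y2)) with d in hm; change (enorm a) with d in h2.
  have lo : d - eps * t k * W <= e by nra.
  have key : - (eps * t k * W * (2 * d + t k * W)) <= e ^+ 2 - d ^+ 2.
    have [ed|ed] := lerP e d; last by nra.
    have hq : 0 <= eps * t k * W by rewrite !mulr_ge0 // ltW.
    nra.
  have : 0 <= t k * (2 * dotp a (w k) + 2 * eps * d * W + (1 + eps) * t k * (W * W)).
    rewrite hsq in key; nra.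
  by rewrite pmulr_rge0.
have hD : (fun k => dotp a (w k)) @ \oo --> dotp a v := cvg_comp _ _ wv (@dotp_cont _ _ a v).
have hW : (fun k => enorm (w k)) @ \oo --> enorm v := cvg_comp _ _ wv (@enorm_cont _ _ v).
have hlim : (fun k => 2 * dotp a (w k) + 2 * eps * d * enorm (w k)
                      + (1 + eps) * t k * (enorm (w k) * enorm (w k))) @ \oo
            --> 2 * dotp a v + 2 * eps * d * enorm v + (1 + eps) * 0 * (enorm v * enorm v).
  apply: cvgD; first apply: cvgD.
  - exact: cvgMl_tmp hD.
  - exact: cvgMl_tmp hW.
  - apply: cvgM; first exact: cvgMl_tmp t0.
    exact: (cvgM hW hW).
have h : 0 <= 2 * dotp a v + 2 * eps * d * enorm v + (1 + eps) * 0 * (enorm v * enorm v).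
  apply: (closed_cvg (fun r : R => 0 <= r) (@closed_ge _ 0) _ _ hlim).
  by apply: nearW => k; exact: ineq.
rewrite mulr0 mul0r addr0 in h.
change (0 <= dotp a v + eps * d * enorm v).
have e2 : 2 * dotp a v + 2 * eps * d * enorm v = 2 * (dotp a v + eps * d * enorm v) by ring.
by rewrite e2 pmulr_rge0 in h.
Qed.

Lemma harmonic_le1 (R : realType) k : (harmonic k : R) <= 1.
Proof. by rewrite /harmonic invf_le1 // ler1n. Qed.

Lemma not_interior (R : realType) (n : nat) (K : set 'rV[R]_n)
    (y1 y2 x1 : 'rV[R]_n) (eps : R) :
  0 <= eps -> eps < 1 -> y1 != y2 ->
  (forall z, K z -> enorm (y1 - y2) + eps * enorm (y1 - x1)
                    <= enorm (z - y2) + eps * enorm (z - x1)) ->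
  ~ interior K y1.
Proof.
move=> e0 e1 y12 hmin hint.
have hz : (fun k => y1 + harmonic k *: (y2 - y1)) @ \oo --> y1.
  suff : (fun k => y1 + harmonic k *: (y2 - y1)) @ \oo --> y1 + 0 *: (y2 - y1).
    by rewrite scale0r addr0.
  apply: cvgD; first exact: cvg_cst.
  exact: (cvgZ (@cvg_harmonic R) (cvg_cst _)).
have [k hk] := @filter_ex nat \oo _ (fun k => K (y1 + harmonic k *: (y2 - y1))) (hz K hint).
have := hmin _ hk.
set h : R := harmonic k.
have h0 : 0 < h := harmonic_gt0 k.
have h1 : h <= 1 := harmonic_le1 R k.
have -> : y1 + h *: (y2 - y1) - y2 = (1 - h) *: (y1 - y2).
  by apply/rowP => i; rewrite !mxE; ring.
rewrite enormZ ger0_norm ?subr_ge0 //.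
have -> : y1 + h *: (y2 - y1) - x1 = (y1 - x1) + h *: (y2 - y1) by apply/rowP => i; rewrite !mxE; ring.
have := enormD (y1 - x1) (h *: (y2 - y1)).
rewrite enormZ gtr0_norm // (enormB y2 y1).
have d0 : 0 < enorm (y1 - y2) by apply: enorm_gt0; rewrite subr_eq0.
set X := enorm (y1 - x1); set d := enorm (y1 - y2) in d0 *.
set Y := enorm (y1 - x1 + h *: (y2 - y1)).
move=> hY hm.
have : eps * Y <= eps * (X + h * d) by rewrite ler_wpM2l.
have : 0 < h * d * (1 - eps) by rewrite !mulr_gt0 // subr_gt0.
nra.
Qed.

Definition phi (R : realType) (n : nat) (x1 x2 : 'rV[R]_n) (eps : R)
  (p : 'rV[R]_n * 'rV[R]_n) : R :=
  enorm (p.1 - p.2) + eps * (enorm (p.1 - x1) + enorm (p.2 - x2)).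

Definition MINP (R : realType) (n : nat) (K1 K2 : set 'rV[R]_n) (x1 x2 : 'rV[R]_n)
  (eps : R) (y1 y2 : 'rV[R]_n) : Prop :=
  forall z1 z2, K1 z1 -> K2 z2 -> phi x1 x2 eps (y1, y2) <= phi x1 x2 eps (z1, z2).

Lemma MINP_swap (R : realType) (n : nat) (K1 K2 : set 'rV[R]_n) (x1 x2 : 'rV[R]_n)
  (eps : R) (y1 y2 : 'rV[R]_n) :
  MINP K1 K2 x1 x2 eps y1 y2 -> MINP K2 K1 x2 x1 eps y2 y1.
Proof.
move=> h z2 z1 hz2 hz1; have := h _ _ hz1 hz2.
by rewrite /phi /= (enormB y2 y1) (enormB z2 z1) (addrC (enorm (y2 - x2))) (addrC (enorm (z2 - x2))).
Qed.

Lemma MINP_left (R : realType) (n : nat) (K1 K2 : set 'rV[R]_n) (x1 x2 : 'rV[R]_n)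
  (eps : R) (y1 y2 : 'rV[R]_n) : K2 y2 ->
  MINP K1 K2 x1 x2 eps y1 y2 ->
  (forall z, K1 z -> enorm (y1 - y2) + eps * enorm (y1 - x1)
                    <= enorm (z - y2) + eps * enorm (z - x1)).
Proof.
move=> hy2 h z hz; have := h _ _ hz hy2; rewrite /phi /= !mulrDr !addrA.
by rewrite lerD2r.
Qed.

Lemma MINP_notin (R : realType) (n : nat) (K1 K2 : set 'rV[R]_n) (x1 x2 : 'rV[R]_n)
  (eps : R) (y1 y2 : 'rV[R]_n) : 0 <= eps -> eps < 1 -> y1 != y2 -> K1 y1 ->
  MINP K1 K2 x1 x2 eps y1 y2 -> ~ K2 y1.
Proof.
move=> e0 e1 y12 hy1 h hy1'.
have := h _ _ hy1 hy1'; rewrite /phi /= subrr enorm0 add0r.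
have d0 : 0 < enorm (y1 - y2) by apply: enorm_gt0; rewrite subr_eq0.
have := enormD (y1 - y2) (y2 - x2); rewrite addrA subrK.
set d := enorm (y1 - y2) in d0 *.
set X := enorm (y1 - x1); set Y := enorm (y2 - x2); set Z := enorm (y1 - x2).
move=> hZ hm.
have : eps * Z <= eps * (d + Y) by rewrite ler_wpM2l.
nra.
Qed.

Lemma enorm_le_enorm2l (R : realType) (n : nat) (v w : 'rV[R]_n) : enorm v <= enorm2 v w.
Proof.
by apply: ler_wsqrtr; rewrite lerDl; apply: sumr_ge0 => i _; exact: sqr_ge0.
Qed.

Lemma enorm_le_enorm2r (R : realType) (n : nat) (v w : 'rV[R]_n) : enorm w <= enorm2 v w.
Proof.
by apply: ler_wsqrtr; rewrite lerDr; apply: sumr_ge0 => i _; exact: sqr_ge0.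
Qed.

Lemma MINP_eq (R : realType) (n : nat) (K1 K2 N : set 'rV[R]_n)
  (x1 x2 : 'rV[R]_n) (eps c alpha : R) (y1 y2 : 'rV[R]_n) :
  0 < c -> 0 <= alpha -> alpha < 1 -> 0 <= eps -> eps < 1 ->
  2 * eps * c < 1 - alpha ->
  (forall x1 x2 : 'rV[R]_n,
      bd K1 x1 -> ~ K2 x1 -> N x1 ->
      bd K2 x2 -> ~ K1 x2 -> N x2 ->
      exists v1 v2 : 'rV[R]_n,
        contingent_cone K1 x1 v1 /\ contingent_cone K2 x2 v2 /\
        enorm2 v1 v2 <= c * enorm (x1 - x2) /\
        enorm ((x2 - x1) - (v1 - v2)) <= alpha * enorm (x1 - x2)) ->
  K1 y1 -> K2 y2 -> N y1 -> N y2 -> MINP K1 K2 x1 x2 eps y1 y2 -> y1 = y2.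
Proof.
move=> c0 a0 a1 e0 e1 ec hmain hy1 hy2 Ny1 Ny2 hmin.
apply/eqP; apply/negPn/negP => y12.
have y21 : y2 != y1 by rewrite eq_sym.
have hmin' := MINP_swap hmin.
have hA := MINP_notin e0 e1 y12 hy1 hmin.
have hB := MINP_notin e0 e1 y21 hy2 hmin'.
have hC := not_interior e0 e1 y12 (MINP_left hy2 hmin).
have hD := not_interior e0 e1 y21 (MINP_left hy1 hmin').
have bd1 : bd K1 y1 by split => //; exact: subset_closure.
have bd2 : bd K2 y2 by split => //; exact: subset_closure.
have [v1 [v2 [hv1 [hv2 [hn ha]]]]] := hmain _ _ bd1 hA Ny1 bd2 hB Ny2.
have f1 := first_order e0 (MINP_left hy2 hmin) hv1.
have f2 := first_order e0 (MINP_left hy1 hmin') hv2.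
rewrite (enormB y2 y1) in f2.
have d0 : 0 < enorm (y1 - y2) by apply: enorm_gt0; rewrite subr_eq0.
set D := y2 - y1 in f2 ha.
have eD : enorm D = enorm (y1 - y2) by rewrite /D enormB.
have hy12 : y1 - y2 = - D by rewrite /D opprB.
rewrite hy12 dotpNl enormN in f1.
set r := D - (v1 - v2) in ha.
have hcs := cauchy_schwarz D r.
have hDr : dotp D (v1 - v2) = dotp D D - dotp D r.
  by rewrite /r !(dotpC D) !dotpBl; ring.
have hDD : dotp D D = enorm D ^+ 2 by rewrite enorm_sq.
have hDv : dotp D (v1 - v2) = dotp D v1 - dotp D v2 by rewrite !(dotpC D) dotpBl.
have n1 := le_trans (enorm_le_enorm2l v1 v2) hn.
have n2 := le_trans (enorm_le_enorm2r v1 v2) hn.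
rewrite eD in hcs hDD f1.
set d := enorm (y1 - y2) in d0 f1 f2 ha n1 n2 hcs hDD.
have := enorm_ge0 r; have := enorm_ge0 v1; have := enorm_ge0 v2.
set Er := enorm r in ha hcs *.
set E1 := enorm v1 in f1 n1 *. set E2 := enorm v2 in f2 n2 *.
move=> E2g E1g Erg.
have h1 : dotp D r <= d * (alpha * d).
  by apply: (le_trans hcs); rewrite ler_wpM2l // ltW.
have h2 : eps * d * E1 <= eps * d * (c * d) by rewrite ler_wpM2l // mulr_ge0 // ltW.
have h3 : eps * d * E2 <= eps * d * (c * d) by rewrite ler_wpM2l // mulr_ge0 // ltW.
have h4 : 0 < d * d by rewrite mulr_gt0.
have h5 : 0 < d * d * (1 - alpha - 2 * eps * c) by rewrite mulr_gt0 //; lra.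
nra.
Qed.

Lemma dist_cont (R : realType) (n : nat) (p : 'rV[R]_n) :
  continuous (fun y : 'rV[R]_n => enorm (y - p)).
Proof.
apply: (@lip_cont _ _ _ n.+1%:R) => // u v.
apply: le_trans (enorm_dist _ _) _.
by rewrite opprB addrA subrK; exact: enorm_le_normr.
Qed.

Lemma phi_cont (R : realType) (n : nat) (x1 x2 : 'rV[R]_n) (eps : R) :
  continuous (phi x1 x2 eps).
Proof.
move=> q.
apply: cvgD.
  apply: (cvg_comp (fun q : 'rV[R]_n * 'rV[R]_n => q.1 - q.2) (@enorm R n)).
    by apply: cvgB; [exact: cvg_fst | exact: cvg_snd].
  exact: enorm_cont.
apply: cvgMl_tmp; apply: cvgD.
  apply: (cvg_comp (fun q : 'rV[R]_n * 'rV[R]_n => q.1) (fun y : 'rV[R]_n => enorm (y - x1))).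
    exact: cvg_fst.
  exact: dist_cont.
apply: (cvg_comp (fun q : 'rV[R]_n * 'rV[R]_n => q.2) (fun y : 'rV[R]_n => enorm (y - x2))).
  exact: cvg_snd.
exact: dist_cont.
Qed.

Lemma ball_closed_bounded (R : realType) (n : nat) (K : set 'rV[R]_n) (p : 'rV[R]_n) (Rb : R) :
  closed K -> compact (K `&` [set y | enorm (y - p) <= Rb]).
Proof.
move=> hK; apply: bounded_closed_compact.
  exists (`|p| + Rb); split; first by rewrite num_real.
  move=> M hM y [_ hy] /=.
  apply: (le_trans _ (ltW hM)).
  have -> : y = p + (y - p) by rewrite addrC subrK.
  apply: le_trans (ler_normD _ _) _; rewrite lerD2l.
  exact: le_trans (normr_le_enorm _) hy.
apply: closedI => //.
apply: (@preimage_closed _ _ (fun y : 'rV[R]_n => enorm (y - p)) [set x | x <= Rb]).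
  by move=> y _; exact: dist_cont.
exact: closed_le.
Qed.

Lemma key_lemma (R : realType) (n : nat) (K1 K2 N : set 'rV[R]_n)
  (hK1 : closed K1) (hK2 : closed K2) (xo : 'rV[R]_n) (hN : nbhs xo N)
  (c alpha : R) (hc : 0 < c) (ha0 : 0 <= alpha) (ha1 : alpha < 1)
  (hmain : forall x1 x2 : 'rV[R]_n,
      bd K1 x1 -> ~ K2 x1 -> N x1 ->
      bd K2 x2 -> ~ K1 x2 -> N x2 ->
      exists v1 v2 : 'rV[R]_n,
        contingent_cone K1 x1 v1 /\ contingent_cone K2 x2 v2 /\
        enorm2 v1 v2 <= c * enorm (x1 - x2) /\
        enorm ((x2 - x1) - (v1 - v2)) <= alpha * enorm (x1 - x2)) :
  exists delta L : R, 0 < delta /\ 0 <= L /\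
    forall p1 p2, K1 p1 -> K2 p2 -> enorm (p1 - xo) < delta -> enorm (p2 - xo) < delta ->
    exists z, K1 z /\ K2 z /\ enorm (z - p1) <= L * enorm (p1 - p2).
Proof.
move/nbhs_ballP: hN => [r r0 hr].
have rN : forall y, enorm (y - xo) < r -> N y.
  move=> y hy; apply: hr; rewrite mx_norm_ball /ball_ /= distrC.
  exact: le_lt_trans (normr_le_enorm _) hy.
pose eps := Num.min (1 / 2) ((1 - alpha) / (4 * c)).
have e0 : 0 < eps.
  by rewrite lt_min divr_gt0 //= divr_gt0 ?mulr_gt0 // subr_gt0.
have e12 : eps <= 1 / 2 by rewrite ge_min lexx.
have e2 : eps <= (1 - alpha) / (4 * c) by rewrite ge_min lexx orbT.
have ec : 2 * eps * c < 1 - alpha.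
  have : eps * (4 * c) <= 1 - alpha by rewrite -ler_pdivlMr ?mulr_gt0.
  have : 0 < 1 - alpha by rewrite subr_gt0.
  nra.
exists (r * eps / 4), eps^-1; split; first by rewrite !divr_gt0 ?mulr_gt0.
split; first by rewrite invr_ge0 ltW.
move=> p1 p2 hp1 hp2 hd1 hd2.
set d0 := enorm (p1 - p2).
set Rb := d0 / eps + 1.
pose C := (K1 `&` [set y | enorm (y - p1) <= Rb]) `*` (K2 `&` [set y | enorm (y - p2) <= Rb]).
have d0ge : 0 <= d0 := enorm_ge0 _.
have Rb0 : 0 <= Rb by rewrite addr_ge0 // divr_ge0 // ltW.
have Cne : C !=set0.
  by exists (p1, p2); split; split => //=; rewrite subrr enorm0.
have Ccomp : compact C.
  by apply: compact_setX; apply: ball_closed_bounded.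
have [[y1 y2] yC ymin] := compact_EVT_min Cne Ccomp
  (continuous_subspaceT (@phi_cont R n p1 p2 eps)).
rewrite inE in yC; case: yC => [[hy1 hy1b] [hy2 hy2b]].
move: hy1 hy1b hy2 hy2b => /= hy1 hy1b hy2 hy2b.
have phip : phi p1 p2 eps (p1, p2) = d0 by rewrite /phi /= !subrr enorm0 addr0 mulr0 addr0.
have phiy : phi p1 p2 eps (y1, y2) <= d0.
  rewrite -phip; apply: ymin; rewrite inE; by split; split => //=; rewrite subrr enorm0.
have hmin : MINP K1 K2 p1 p2 eps y1 y2.
  move=> z1 z2 hz1 hz2.
  have [zb1|zb1] := lerP (enorm (z1 - p1)) Rb; last first.
    apply: (le_trans phiy); rewrite /phi /=.
    have := enorm_ge0 (z1 - z2); have := enorm_ge0 (z2 - p2).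
    have : eps * Rb = d0 + eps by rewrite /Rb mulrDr mulr1 mulrCA divff ?mulr1 // gt_eqF.
    nra.
  have [zb2|zb2] := lerP (enorm (z2 - p2)) Rb; last first.
    apply: (le_trans phiy); rewrite /phi /=.
    have := enorm_ge0 (z1 - z2); have := enorm_ge0 (z1 - p1).
    have : eps * Rb = d0 + eps by rewrite /Rb mulrDr mulr1 mulrCA divff ?mulr1 // gt_eqF.
    nra.
  by apply: ymin; rewrite inE.
have hyb : forall y p, eps * enorm (y - p) <= d0 -> enorm (y - p) <= d0 / eps.
  by move=> y p h; rewrite ler_pdivlMr // mulrC.
move: phiy; rewrite /phi /= => phiy.
have hb1 : enorm (y1 - p1) <= d0 / eps.
  apply: hyb; have := enorm_ge0 (y1 - y2); have := enorm_ge0 (y2 - p2);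
  have := enorm_ge0 (y1 - p1); nra.
have hb2 : enorm (y2 - p2) <= d0 / eps.
  apply: hyb; have := enorm_ge0 (y1 - y2); have := enorm_ge0 (y2 - p2);
  have := enorm_ge0 (y1 - p1); nra.
have hd0 : d0 <= 2 * (r * eps / 4).
  have := enormD (p1 - xo) (xo - p2); rewrite addrA subrK -/d0 (enormB xo p2); lra.
have hd0e : d0 / eps <= r / 2.
  rewrite ler_pdivrMr //; apply: le_trans hd0 _; rewrite le_eqVlt; apply/orP; left; apply/eqP.
  by field.
have r8 : r * eps / 4 <= r / 8.
  have := ler_wpM2l (ltW r0) e12; lra.
have Ny1 : N y1.
  apply: rN; have := enormD (y1 - p1) (p1 - xo); rewrite addrA subrK; lra.
have Ny2 : N y2.
  apply: rN; have := enormD (y2 - p2) (p2 - xo); rewrite addrA subrK; lra.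
have e1 : eps < 1 by apply: le_lt_trans e12 _; lra.
have y12 := MINP_eq hc ha0 ha1 (ltW e0) e1 ec hmain hy1 hy2 Ny1 Ny2 hmin.
exists y1; split => //; split; first by rewrite y12.
by rewrite mulrC.
Qed.

Lemma assembly (R : realType) (n : nat) (K1 K2 : set 'rV[R]_n) (xo : 'rV[R]_n)
  (delta L : R) (d0 : 0 < delta) (L0 : 0 <= L)
  (hkey : forall p1 p2, K1 p1 -> K2 p2 -> enorm (p1 - xo) < delta -> enorm (p2 - xo) < delta ->
    exists z, K1 z /\ K2 z /\ enorm (z - p1) <= L * enorm (p1 - p2))
  (hxo1 : K1 xo) (hxo2 : K2 xo)
  (t : nat -> R) (w1 w2 : nat -> 'rV[R]_n) (v : 'rV[R]_n) :
  (forall i, 0 < t i) -> t @ \oo --> 0 -> w1 @ \oo --> v -> w2 @ \oo --> v ->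
  (forall i, K1 (xo + t i *: w1 i)) -> (forall i, K2 (xo + t i *: w2 i)) ->
  exists u : nat -> 'rV[R]_n, u @ \oo --> v /\ forall i, (K1 `&` K2) (xo + t i *: u i).
Proof.
move=> tpos t0 hw1 hw2 hK1 hK2.
have pcv : forall w : nat -> 'rV[R]_n, w @ \oo --> v ->
    \forall k \near \oo, enorm (xo + t k *: w k - xo) < delta.
  move=> w hw.
  have hp : (fun k => xo + t k *: w k) @ \oo --> xo.
    suff : (fun k => xo + t k *: w k) @ \oo --> xo + 0 *: v by rewrite scale0r addr0.
    by apply: cvgD; [exact: cvg_cst | exact: cvgZ].
  have dn : 0 < delta / n.+1%:R by rewrite divr_gt0.
  apply: filterS (cvgr_dist_lt _ _ hp _ dn) => k hk.
  apply: le_lt_trans (enorm_le_normr _) _.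
  by rewrite -ltr_pdivlMl // mulrC distrC.
have [N _ hN] := filterS2 _ (fun k (a b : _) => conj a b) (pcv _ hw1) (pcv _ hw2).
have hz : forall k, exists z, K1 z /\ K2 z /\
    ((N <= k)%N -> enorm (z - (xo + t k *: w1 k)) <= L * enorm ((xo + t k *: w1 k) - (xo + t k *: w2 k))).
  move=> k; case: (leqP N k) => hNk.
    have [h1 h2] := hN k hNk.
    have [z [hz1 [hz2 hzb]]] := hkey _ _ (hK1 k) (hK2 k) h1 h2.
    by exists z.
  by exists xo; split => //; split => //; rewrite leqNgt hNk.
have [z hzP] := choice hz.
exists (fun k => (t k)^-1 *: (z k - xo)); split; last first.
  move=> i; have [hz1 [hz2 _]] := hzP i.
  by rewrite scalerA mulfV ?gt_eqF // scale1r addrC subrK.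
have hdiff : (fun k => (t k)^-1 *: (z k - xo) - w1 k) @ \oo --> (0 : 'rV[R]_n).
  have hw12 : (fun k => w1 k - w2 k) @ \oo --> (0 : 'rV[R]_n).
    by rewrite -(subrr v); apply: cvgB.
  apply/cvgr0Pnorm_lt => e e0.
  have eK : 0 < e / (L * n.+1%:R + 1) by rewrite divr_gt0 // ltr_wpDl // mulr_ge0.
  have ev1 : \forall k \near \oo, (N <= k)%N by exists N.
  apply: (filterS2 _ _ ev1) ((cvgr0Pnorm_lt _).1 hw12 _ eK) => k hNk hk.
  have [_ [_ hb]] := hzP k; have {}hb := hb hNk.
  have tk := tpos k.
  have -> : (t k)^-1 *: (z k - xo) - w1 k = (t k)^-1 *: (z k - (xo + t k *: w1 k)).
    by apply/rowP => i; rewrite !mxE; field; rewrite gt_eqF.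
  have ew : (xo + t k *: w1 k) - (xo + t k *: w2 k) = t k *: (w1 k - w2 k).
    by apply/rowP => i; rewrite !mxE; ring.
  rewrite ew enormZ gtr0_norm // in hb.
  apply: le_lt_trans (normr_le_enorm _) _.
  rewrite enormZ gtr0_norm ?invr_gt0 //.
  have hb2 : (t k)^-1 * enorm (z k - (xo + t k *: w1 k)) <= L * enorm (w1 k - w2 k).
    rewrite ler_pdivrMl // mulrCA; exact: hb.
  apply: le_lt_trans hb2 _.
  have := enorm_le_normr (w1 k - w2 k).
  rewrite ltr_pdivlMr ?ltr_wpDl ?mulr_ge0 // in hk.
  move=> hE.
  have := normr_ge0 (w1 k - w2 k); have := enorm_ge0 (w1 k - w2 k).
  nra.
suff : (fun k => ((t k)^-1 *: (z k - xo) - w1 k) + w1 k) @ \oo --> 0 + v.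
  by rewrite add0r; apply: cvg_trans; apply: near_eq_cvg; apply: nearW => k; rewrite subrK.
exact: cvgD.
Qed.

Unset Implicit Arguments.
Theorem lemma1 (R : realType) (n : nat) (K1 K2 : set 'rV[R]_n)
  (hK1 : closed K1) (hK2 : closed K2)
  (hreg : forall x, bd K1 x -> bd K2 x -> contingent_cone K1 x = adjacent_cone K1 x)
  (xo : 'rV[R]_n) (hxo1 : bd K1 xo) (hxo2 : bd K2 xo)
  (N : set 'rV[R]_n) (hN : nbhs xo N) (c alpha : R)
  (hc : 0 < c) (ha0 : 0 <= alpha) (ha1 : alpha < 1)
  (hmain : forall x1 x2 : 'rV[R]_n,
      bd K1 x1 -> ~ K2 x1 -> N x1 ->
      bd K2 x2 -> ~ K1 x2 -> N x2 ->
      exists v1 v2 : 'rV[R]_n,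
        contingent_cone K1 x1 v1 /\ contingent_cone K2 x2 v2 /\
        enorm2 v1 v2 <= c * enorm (x1 - x2) /\
        enorm ((x2 - x1) - (v1 - v2)) <= alpha * enorm (x1 - x2)) :
  contingent_cone K1 xo `&` contingent_cone K2 xo = contingent_cone (K1 `&` K2) xo /\
  adjacent_cone K1 xo `&` adjacent_cone K2 xo = adjacent_cone (K1 `&` K2) xo.
Proof.
have Kxo1 : K1 xo by rewrite (closure_id K1).1 //; case: hxo1.
have Kxo2 : K2 xo by rewrite (closure_id K2).1 //; case: hxo2.
have [delta [L [d0 [L0 hkey]]]] := key_lemma hK1 hK2 hN hc ha0 ha1 hmain.
have asm := assembly d0 L0 hkey Kxo1 Kxo2.
split; apply/seteqP; split.
- move=> v [h1 [t [w2 [tpos [t0 [hw2 hK2']]]]]].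
  have hA : adjacent_cone K1 xo v by rewrite -(hreg xo hxo1 hxo2).
  have [w1 [hw1 hK1']] := hA t tpos t0.
  have [u [hu hK]] := asm t w1 w2 v tpos t0 hw1 hw2 hK1' hK2'.
  by exists t, u.
- move=> v [t [u [tpos [t0 [hu hK]]]]]; split; exists t, u; do 3 split => //;
    by move=> i; case: (hK i).
- move=> v [h1 h2] t tpos t0.
  have [w1 [hw1 hK1']] := h1 t tpos t0.
  have [w2 [hw2 hK2']] := h2 t tpos t0.
  have [u [hu hK]] := asm t w1 w2 v tpos t0 hw1 hw2 hK1' hK2'.
  by exists u.
- move=> v h; split => t tpos t0; have [u [hu hK]] := h t tpos t0;
    exists u; split => // i; by case: (hK i).
Qed.
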